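(* Let $r \geq 1$ be an integer. Then for every integer $n \geq 0$, $$\sum_{k=0}^{n} (-1)^k \frac{k!}{k+r}\, S(n,k) = \frac{1}{(r-1)!} \sum_{k=0}^{r-1} |s(r,k+1)|\, B_{n+k}.$$
   Context: For $n \geq 0$, $X^{\underline{n}} := X(X-1)\cdots(X-n+1)$ ($X^{\underline{0}}=1$). The (signed) Stirling numbers of the first kind $s(n,k)$ are defined by $X^{\underline{n}} = \sum_{k=0}^{n} s(n,k) X^k$, and the Stirling numbers of the second kind $S(n,k)$ by $X^n = \sum_{k=0}^{n} S(n,k) X^{\underline{k}}$ (for all $n\ge 0$), with $s(n,k)=S(n,k)=0$ when $n<k$. The Bernoulli numbers $B_n$ are defined by $\frac{t}{e^t-1} = \sum_{n\ge 0} B_n \frac{t^n}{n!}$. *)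

(* Defs.v *)
From HB Require Import structures.
From mathcomp Require Import all_boot all_order all_algebra.
Set Implicit Arguments. Unset Strict Implicit. Unset Printing Implicit Defensive.
Import Order.TTheory GRing.Theory Num.Theory.
Local Open Scope ring_scope.

Definition falling_poly (n : nat) : {poly int} :=
  \prod_(i < n) ('X - (i%:R)%:P).

Definition stirling1 (n k : nat) : int := (falling_poly n)`_k.

(* Stirling numbers of the second kind, via the standard recurrence
   S(0,0)=1, S(0,k+1)=0, S(n+1,0)=0, S(n+1,k+1) = (k+1) S(n,k+1) + S(n,k),
   which is equivalent to X^n = sum_k S(n,k) X^{\underline k}. *)
Fixpoint stirling2 (n k : nat) : nat :=
  match n, k with
  | 0, 0 => 1
  | 0, _.+1 => 0
  | _.+1, 0 => 0
  | n'.+1, k'.+1 => k'.+1 * stirling2 n' k'.+1 + stirling2 n' k'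
  end.

(* Bernoulli numbers defined by t/(e^t-1) = sum_n B_n t^n/n!.
   Multiplying by (e^t-1)/t = sum_m t^m/(m+1)! and comparing coefficients of
   t^n gives  sum_{k<=n} B_k / (k! (n-k+1)!) = [n = 0], i.e.
   B_n = - n! * sum_{k<n} B_k / (k! (n-k+1)!).  bern_list n = [B_0; ...; B_n]. *)
Fixpoint bern_list (n : nat) : seq rat :=
  match n with
  | 0 => [:: 1]
  | n'.+1 =>
      let l := bern_list n' in
      rcons l (- (n`!)%:R *
               \sum_(k < n) nth 0 l k / ((k`!)%:R * ((n - k).+1`!)%:R))
  end.

Definition bernoulli (n : nat) : rat := nth 0 (bern_list n) n.

(* Main.v *)
Require Import Defs.
From mathcomp Require Import all_boot all_order all_algebra.
From mathcomp Require Import ring lra zify.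
Import Order.TTheory GRing.Theory Num.Theory.
Local Open Scope ring_scope.

Lemma S2_gt n k : (n < k)%N -> stirling2 n k = 0%N.
Proof.
elim: n k => [|n IH] [|k] //= H.
by rewrite !IH //; lia.
Qed.

Lemma S2_S0 n : stirling2 n.+1 0 = 0%N. Proof. by []. Qed.
Lemma S2_SS n k : stirling2 n.+1 k.+1 = (k.+1 * stirling2 n k.+1 + stirling2 n k)%N.
Proof. by []. Qed.
Lemma S2_0 n : stirling2 n 0 = (n == 0)%N.
Proof. by case: n. Qed.

Definition aa (r k : nat) : rat := (-1) ^+ k * ((k`!)%:R / (k + r)%:R).
Definition ff (n r : nat) : rat := \sum_(0 <= k < n.+1) aa r k * (stirling2 n k)%:R.

Lemma sum_S2_widen (F : nat -> rat) n N : (n < N)%N ->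
  \sum_(0 <= k < N) F k * (stirling2 n k)%:R = \sum_(0 <= k < n.+1) F k * (stirling2 n k)%:R.
Proof.
move=> H; rewrite (big_cat_nat (n:=n.+1)) //=.
rewrite [X in _ + X]big1_seq ?addr0 // => k /andP[_].
by rewrite mem_iota => /andP[Hk _]; rewrite S2_gt // mulr0.
Qed.

Lemma ff_shift n r : ff n.+1 r =
  \sum_(0 <= k < n.+1) (aa r k * k%:R + aa r k.+1) * (stirling2 n k)%:R.
Proof.
rewrite /ff big_nat_recl // S2_S0 mulr0 add0r.
under eq_bigr => k _ do rewrite S2_SS natrD natrM mulrDr.
rewrite big_split /=.
under [X in _ = X]eq_bigr => k _ do rewrite mulrDl.
rewrite big_split /=; congr (_ + _).
under [X in _ = X]eq_bigr => k _ do rewrite -mulrA.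
rewrite big_nat_recr //= [in X in _ = X]big_nat_recl //=.
by rewrite S2_gt // !mulr0 addr0 mul0r mulr0 add0r.
Qed.

Lemma aa_rec r k : (0 < r)%N ->
  aa r k * k%:R + aa r k.+1 + r%:R * aa r k = r%:R * aa r.+1 k.
Proof.
move=> hr; rewrite /aa exprS factS natrM.
have e1 : (k.+1 + r = (k + r) + 1)%N by lia.
have e2 : (k + r.+1 = (k + r) + 1)%N by lia.
rewrite e1 e2 -addn1 !natrD.
have h1 : ((k + r)%:R : rat) != 0 by rewrite pnatr_eq0; lia.
have h2 : ((k + r + 1)%:R : rat) != 0 by rewrite pnatr_eq0; lia.
rewrite !natrD in h1 h2.
field.
by rewrite h1 h2.
Qed.

Lemma aa0 k : aa 0 k * k%:R + aa 0 k.+1 = if k == 0%N then -1 else 0.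
Proof.
case: k => [|k]; first by rewrite /aa /= mulr0 add0r expr1 addn0 invr1 !mulr1.
rewrite /= /aa !addn0 !exprS [k.+2`!]factS natrM.
have h1 : ((k.+1)%:R : rat) != 0 by rewrite pnatr_eq0.
have h2 : ((k.+2)%:R : rat) != 0 by rewrite pnatr_eq0.
field.
rewrite -(natrD _ 2 k) -(natrD _ 1 k) !pnatr_eq0 //.
Qed.

Lemma ff_rec n r : (0 < r)%N -> r%:R * ff n r.+1 = ff n.+1 r + r%:R * ff n r.
Proof.
move=> hr; rewrite ff_shift /ff !big_distrr -big_split /=.
apply: eq_bigr => k _; rewrite (mulrA r%:R) -aa_rec //.
ring.
Qed.

Lemma ff0 n : ff n.+1 0 = - (n == 0%N)%:R.
Proof.
rewrite ff_shift big_nat_recl // aa0 /= big1 ?addr0.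
  by rewrite S2_0 mulN1r.
by move=> k _; rewrite aa0 /= mul0r.
Qed.

Section NatS.
Local Open Scope nat_scope.
Lemma binS2 n j : (\sum_(0 <= k < n.+1) 'C(n, k) * stirling2 k j)%N = stirling2 n.+1 j.+1.
Proof.
elim: n j => [|n IH] j.
  by rewrite big_nat1 bin0 mul1n; case: j => [|j] //=; rewrite muln0.
have A : (\sum_(0 <= k < n.+2) 'C(n.+1, k) * stirling2 k j =
   \sum_(0 <= k < n.+2) 'C(n, k) * stirling2 k j +
   \sum_(0 <= k < n.+1) 'C(n, k) * stirling2 k.+1 j)%N.
  rewrite big_nat_recl // [in X in _ = X + _]big_nat_recl // !bin0 !mul1n -addnA; congr (_ + _).
  by rewrite -big_split; apply: eq_bigr => k _; rewrite binS mulnDl.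
rewrite A big_nat_recr //= bin_small // mul0n addn0 IH; clear A.
case: j => [|j].
  rewrite big1; last by move=> k _; rewrite ?S2_S0 muln0.
  by rewrite !mul1n /= !mul1n.
rewrite (eq_bigr (fun k => j.+1 * ('C(n, k) * stirling2 k j.+1) + 'C(n, k) * stirling2 k j))%N; last first.
  by move=> k _; rewrite mulnDr mulnCA.
rewrite big_split /= -big_distrr /= !IH !S2_SS; nia.
Qed.
End NatS.

Lemma binS2' n k : (\sum_(0 <= m < n.+1) 'C(n.+1, m) * stirling2 m k)%N =
  (k.+1 * stirling2 n.+1 k.+1)%N.
Proof.
have := binS2 n.+1 k.
rewrite big_nat_recr // binn mul1n S2_SS => /eqP; rewrite eqn_add2r => /eqP //.
Qed.

Lemma key n : \sum_(0 <= m < n.+1) ('C(n.+1, m))%:R * ff m 1 = (n == 0%N)%:R.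
Proof.
rewrite (eq_big_nat _ _ (F2 := fun m => 'C(n.+1, m)%:R *
   \sum_(0 <= k < n.+1) aa 1 k * (stirling2 m k)%:R)); last first.
  by move=> m /andP[_ Hm]; rewrite /ff sum_S2_widen.
under eq_bigr => m _ do rewrite big_distrr /=.
rewrite exchange_big_nat /=.
under eq_bigr => k _.
  rewrite (eq_bigr (fun m => aa 1 k * ('C(n.+1, m) * stirling2 m k)%:R)); last first.
    by move=> m _; rewrite natrM mulrCA.
  rewrite -big_distrr /= -natr_sum binS2' natrM.
  over.
have H := ff0 n; rewrite /ff big_nat_recl // S2_S0 mulr0 add0r in H.
rewrite -[RHS]opprK -H -sumrN; apply: eq_bigr => k _.
rewrite /aa !addn0 addn1 exprS factS natrM.
have h1 : ((k.+1)%:R : rat) != 0 by rewrite pnatr_eq0.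
field; by rewrite addrC natr1 pnatr_eq0.
Qed.

Lemma size_bern n : size (bern_list n) = n.+1.
Proof. by elim: n => [|n IH] //=; rewrite size_rcons IH. Qed.

Lemma bern_nth n k : (k <= n)%N -> nth 0 (bern_list n) k = bernoulli k.
Proof.
elim: n => [|n IH]; first by rewrite leqn0 => /eqP ->.
rewrite leq_eqVlt => /orP[/eqP -> //|Hk].
by rewrite /= nth_rcons size_bern Hk IH.
Qed.

Lemma bernS n : bernoulli n.+1 = - (n.+1`!)%:R *
  \sum_(k < n.+1) bernoulli k / ((k`!)%:R * ((n.+1 - k).+1`!)%:R).
Proof.
rewrite {1}/bernoulli /= nth_rcons size_bern ltnn eqxx.
congr (_ * _); apply: eq_bigr => k _; rewrite bern_nth //.
by rewrite -ltnS.
Qed.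

Lemma ff_bern n : ff n 1 = bernoulli n.
Proof.
elim/ltn_ind: n => n IH; case: n IH => [|n] IH.
  by rewrite /ff big_nat1 /aa /= divr1 !mul1r.
rewrite bernS.
under eq_bigr => k _ do rewrite -(IH k (ltn_ord k)).
have K := key n.+1; rewrite /= big_nat_recr //= binSn in K.
have E : forall m, (m < n.+2)%N -> ('C(n.+2, m)%:R : rat) =
   (n.+2`!)%:R / ((m`!)%:R * ((n.+1 - m).+1`!)%:R).
  move=> m Hm; rewrite -(bin_fact (ltnW Hm)) -subSn // !natrM mulfK //.
  by rewrite mulf_neq0 // pnatr_eq0 -lt0n fact_gt0.
rewrite (eq_big_nat _ _ (F2 := fun m => (n.+2`!)%:R * (ff m 1 / ((m`!)%:R * ((n.+1 - m).+1`!)%:R)))) in K; last first.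
  by move=> m /andP[_ Hm]; rewrite E; [rewrite mulrAC -mulrA | exact: ltnW].
rewrite -big_distrr /= big_mkord in K.
move: K; set T := \sum_(i < n.+1) _ => K.
rewrite factS natrM in K.
have h2 : ((n.+2)%:R : rat) != 0 by rewrite pnatr_eq0.
apply: (mulfI h2).
move: K; set A := (n.+2)%:R; set B := (n.+1)`!%:R; set F := ff n.+1 1.
move=> K.
lra.
Qed.

Lemma fp0 : falling_poly 0 = 1. Proof. by rewrite /falling_poly big_ord0. Qed.
Lemma fpS r : falling_poly r.+1 = falling_poly r * ('X - (r%:R)%:P).
Proof. by rewrite /falling_poly big_ord_recr. Qed.

Lemma s1_0k k : stirling1 0 k = (k == 0%N)%:R.
Proof. by rewrite /stirling1 fp0 coef1. Qed.
Lemma s1_S0 r : stirling1 r.+1 0 = - r%:R * stirling1 r 0.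
Proof.
by rewrite /stirling1 fpS mulrBr coefB coefMX coefMC /= sub0r mulrC mulNr.
Qed.
Lemma s1_SS r k : stirling1 r.+1 k.+1 = stirling1 r k - r%:R * stirling1 r k.+1.
Proof.
by rewrite /stirling1 fpS mulrBr coefB coefMX coefMC /= mulrC.
Qed.

Definition uu (r k : nat) : int := (-1) ^+ (r + k) * stirling1 r k.

Lemma uu_0k k : uu 0 k = (k == 0%N)%:R.
Proof. by rewrite /uu s1_0k; case: k => [|k] //=; rewrite mulr0. Qed.
Lemma uu_S0 r : uu r.+1 0 = r%:R * uu r 0.
Proof. rewrite /uu s1_S0 !addn0 exprS; ring. Qed.
Lemma uu_SS r k : uu r.+1 k.+1 = uu r k + r%:R * uu r k.+1.
Proof. rewrite /uu s1_SS addSn addnS !exprS; ring. Qed.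

Lemma uu_ge0 r k : 0 <= uu r k.
Proof.
elim: r k => [|r IH] k; first by rewrite uu_0k; case: (k == 0%N).
case: k => [|k]; first by rewrite uu_S0 mulr_ge0.
by rewrite uu_SS addr_ge0 // mulr_ge0.
Qed.

Lemma abs_s1 r k : `|stirling1 r k| = uu r k.
Proof.
rewrite -(ger0_norm (uu_ge0 r k)) /uu normrM normrX normrN1 expr1n mul1r //.
Qed.

Lemma uu_r0 r : (0 < r)%N -> uu r 0 = 0.
Proof.
case: r => // r _; elim: r => [|r IH]; first by rewrite uu_S0 mul0r.
by rewrite uu_S0 IH mulr0.
Qed.

Lemma uu_gt r k : (r < k)%N -> uu r k = 0.
Proof.
elim: r k => [|r IH] [|k] // H; first by rewrite uu_0k.
by rewrite uu_SS !IH ?mulr0 ?addr0 //; lia.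
Qed.

Definition TT n r := \sum_(0 <= k < r) ((uu r k.+1)%:~R : rat) * bernoulli (n + k).

Lemma TT_rec n r : (0 < r)%N -> TT n r.+1 = TT n.+1 r + r%:R * TT n r.
Proof.
move=> hr; rewrite /TT.
under eq_bigr => k _ do rewrite uu_SS intrD intrM natz mulrDl -mulrA.
rewrite big_split /= -big_distrr /=; congr (_ + _ * _).
  rewrite big_nat_recl // uu_r0 // mul0r add0r.
  by apply: eq_bigr => k _; rewrite addnS addSn.
by rewrite big_nat_recr //= uu_gt // mul0r addr0.
Qed.

Lemma main r n : ff n r.+1 = ((r`!)%:R)^-1 * TT n r.+1.
Proof.
elim: r n => [|r IH] n.
  rewrite ff_bern /TT big_nat1 addn0 uu_SS uu_0k mul0r addr0 /=.
  by rewrite invr1 !mul1r.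
have h : ((r.+1)%:R : rat) != 0 by rewrite pnatr_eq0.
apply: (mulfI h); rewrite ff_rec // !IH (@TT_rec n r.+1) // factS natrM invfM.
field.
by rewrite pnatr_eq0 -lt0n fact_gt0 addrC natr1 pnatr_eq0.
Qed.

Theorem theorem5 (r : nat) (hr : (1 <= r)%N) (n : nat) :
  \sum_(k < n.+1) (-1) ^+ k * ((k`!)%:R / (k + r)%:R) * (stirling2 n k)%:R
  = (((r.-1)`!)%:R)^-1 *
    \sum_(k < r) (`|stirling1 r k.+1|%:~R : rat) * bernoulli (n + k).
Proof.
case: r hr => // r _ /=.
have := main r n; rewrite /ff /TT !big_mkord => ->.
congr (_ * _); apply: eq_bigr => k _; by rewrite abs_s1.
Qed.
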